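(* With $\mathbf{Y}_\mathrm{l},\mathbf{Y}_\mathrm{e}$ as in the context and $g(\mathbf{v})=\frac{\mathbf{v}^H\mathbf{Y}_\mathrm{l}\mathbf{v}}{\mathbf{v}^H\mathbf{Y}_\mathrm{e}\mathbf{v}}$, let $\mathbf{v}^{(t)}\in\mathbb{C}^M$ satisfy $|v^{(t)}_i|=1$ for all $i$, let $$\mathbf{w}^{(t)}=\frac{\mathbf{Y}_\mathrm{l}\mathbf{v}^{(t)}}{(\mathbf{v}^{(t)})^H\mathbf{Y}_\mathrm{e}\mathbf{v}^{(t)}}-\frac{(\mathbf{v}^{(t)})^H\mathbf{Y}_\mathrm{l}\mathbf{v}^{(t)}}{[(\mathbf{v}^{(t)})^H\mathbf{Y}_\mathrm{e}\mathbf{v}^{(t)}]^2}\big[\mathbf{Y}_\mathrm{e}-\lambda_{\max}(\mathbf{Y}_\mathrm{e})\mathbf{I}_M\big]\mathbf{v}^{(t)},$$ and let $\mathbf{v}^{(t+1)}$ be any vector with $|v^{(t+1)}_i|=1$ for all $i$ and $v^{(t+1)}_i=w^{(t)}_i/|w^{(t)}_i|$ whenever $w^{(t)}_i\ne0$. Then $g(\mathbf{v}^{(t+1)})\ge g(\mathbf{v}^{(t)})$.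
   Context: Let $M,N_t\ge1$, $P\ge0$, $\sigma_\mathrm{l}^2,\sigma_\mathrm{e}^2>0$, $\mathbf{R}_\mathrm{l},\mathbf{R}_\mathrm{e}\in\mathbb{C}^{M\times N_t}$, $\mathbf{f}\in\mathbb{C}^{N_t}$, and $\mathbf{Y}_i=\frac1M\mathbf{I}_M+\frac{P}{\sigma_i^2}\mathbf{R}_i\mathbf{f}\mathbf{f}^H\mathbf{R}_i^H$ for $i\in\{\mathrm{l},\mathrm{e}\}$. $\lambda_{\max}$ denotes the largest eigenvalue of a Hermitian matrix. *)

(* Defs.v *)
(* Complex scalars: an arbitrary numClosedFieldType C
   (the abstract structure of the complex numbers, with conjugation). *)
From HB Require Import structures.
From mathcomp Require Import all_boot all_order all_algebra.
Set Implicit Arguments. Unset Strict Implicit. Unset Printing Implicit Defensive.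
Import Order.TTheory GRing.Theory Num.Theory.
Local Open Scope ring_scope.

Definition hadj (C : numClosedFieldType) (m n : nat) (A : 'M[C]_(m, n)) : 'M[C]_(n, m) :=
  (map_mx Num.conj A)^T.

Definition Ymat (C : numClosedFieldType) (M Nt : nat) (P sigma2 : C)
  (R : 'M[C]_(M, Nt)) (f : 'cV[C]_Nt) : 'M[C]_M :=
  (M%:R)^-1%:M + (P / sigma2) *: (R *m f *m hadj f *m hadj R).

Definition qform (C : numClosedFieldType) (M : nat) (Y : 'M[C]_M) (v : 'cV[C]_M) : C :=
  (hadj v *m Y *m v) 0 0.

Definition is_lambda_max (C : numClosedFieldType) (M : nat) (Y : 'M[C]_M) (lam : C) : Prop :=
  eigenvalue Y lam /\ (forall b, eigenvalue Y b -> b <= lam).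

Definition gratio (C : numClosedFieldType) (M : nat) (Yl Ye : 'M[C]_M) (v : 'cV[C]_M) : C :=
  qform Yl v / qform Ye v.

Definition wvec (C : numClosedFieldType) (M : nat) (Yl Ye : 'M[C]_M) (lam : C)
  (v : 'cV[C]_M) : 'cV[C]_M :=
  (qform Ye v)^-1 *: (Yl *m v)
  - (qform Yl v / (qform Ye v) ^+ 2) *: ((Ye - lam%:M) *m v).

(* Main.v *)
Require Import Defs.
From HB Require Import structures.
From mathcomp Require Import all_boot all_order all_algebra.
From mathcomp Require Import ring.
Set Implicit Arguments. Unset Strict Implicit. Unset Printing Implicit Defensive.
Import Order.TTheory GRing.Theory Num.Theory.
Local Open Scope ring_scope.

Section Dot.
Variables (C : numClosedFieldType) (M : nat).
Implicit Types (x y z u : 'cV[C]_M) (a b : C).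

Definition dot x y : C := (hadj x *m y) 0 0.

Lemma dotE x y : dot x y = \sum_i (x i 0)^* * y i 0.
Proof. by rewrite /dot /hadj !mxE; apply: eq_bigr => i _; rewrite !mxE. Qed.

Lemma dotDl x y z : dot (x + y) z = dot x z + dot y z.
Proof. rewrite !dotE -big_split /=; apply: eq_bigr => i _; by rewrite !mxE rmorphD mulrDl. Qed.
Lemma dotDr x y z : dot z (x + y) = dot z x + dot z y.
Proof. rewrite !dotE -big_split /=; apply: eq_bigr => i _; by rewrite !mxE mulrDr. Qed.
Lemma dotNl x z : dot (- x) z = - dot x z.
Proof. rewrite !dotE -sumrN; apply: eq_bigr => i _; by rewrite !mxE rmorphN mulNr. Qed.
Lemma dotNr x z : dot z (- x) = - dot z x.
Proof. rewrite !dotE -sumrN; apply: eq_bigr => i _; by rewrite !mxE mulrN. Qed.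
Lemma dotBl x y z : dot (x - y) z = dot x z - dot y z.
Proof. by rewrite dotDl dotNl. Qed.
Lemma dotBr x y z : dot z (x - y) = dot z x - dot z y.
Proof. by rewrite dotDr dotNr. Qed.
Lemma dotZl a x z : dot (a *: x) z = a^* * dot x z.
Proof. rewrite !dotE mulr_sumr; apply: eq_bigr => i _; by rewrite !mxE rmorphM mulrA. Qed.
Lemma dotZr a x z : dot z (a *: x) = a * dot z x.
Proof. rewrite !dotE mulr_sumr; apply: eq_bigr => i _; by rewrite !mxE mulrCA. Qed.
Lemma dot_conj x y : (dot x y)^* = dot y x.
Proof. rewrite !dotE rmorph_sum; apply: eq_bigr => i _; by rewrite rmorphM /= conjCK mulrC. Qed.
Lemma dot0l z : dot 0 z = 0.
Proof. rewrite dotE big1 // => i _; by rewrite mxE rmorph0 mul0r. Qed.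
Lemma dot_ge0 x : 0 <= dot x x.
Proof. rewrite dotE sumr_ge0 // => i _; by rewrite -normCKC exprn_ge0. Qed.
Lemma dot_eq0 x : dot x x = 0 -> x = 0.
Proof.
rewrite dotE => Hs.
have Hge : forall i : 'I_M, true -> 0 <= (x i 0)^* * x i 0.
  by move=> i _; rewrite -normCKC exprn_ge0.
have H := psumr_eq0P Hge Hs.
apply/matrixP => i j; rewrite (ord1 j) mxE.
have := H i isT; rewrite -normCKC => /eqP; rewrite expf_eq0 /= normr_eq0 => /eqP //.
Qed.
End Dot.

Section Y.
Variables (C : numClosedFieldType) (M Nt : nat).
Implicit Types (x y z u : 'cV[C]_M).

Lemma hadjM (R : 'M[C]_(M, Nt)) (f : 'cV[C]_Nt) : hadj (R *m f) = hadj f *m hadj R.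
Proof. by rewrite /hadj map_mxM trmx_mul. Qed.

Lemma mul_hadj u x : u *m hadj u *m x = dot u x *: u.
Proof. by rewrite -mulmxA [hadj u *m x]mx11_scalar mul_mx_scalar. Qed.

Lemma YmatE P s (R : 'M[C]_(M, Nt)) f :
  Ymat P s R f = (M%:R)^-1%:M + (P / s) *: ((R *m f) *m hadj (R *m f)).
Proof. by rewrite /Ymat hadjM !mulmxA. Qed.

Lemma Ymul P s (R : 'M[C]_(M, Nt)) f x :
  Ymat P s R f *m x = (M%:R)^-1 *: x + (P / s * dot (R *m f) x) *: (R *m f).
Proof. by rewrite YmatE mulmxDl mul_scalar_mx -scalemxAl mul_hadj scalerA. Qed.

Lemma qformE (Y : 'M[C]_M) x : qform Y x = dot x (Y *m x).
Proof. by rewrite /qform /dot mulmxA. Qed.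

Lemma Yherm P s (R : 'M[C]_(M, Nt)) f x y : 0 <= P -> 0 < s ->
  dot (Ymat P s R f *m x) y = dot x (Ymat P s R f *m y).
Proof.
move=> hP hs; rewrite !Ymul dotDl dotDr !dotZl !dotZr rmorphM /= dot_conj.
rewrite !geC0_conj ?invr_ge0 ?ler0n ?(divr_ge0 hP (ltW hs)) //.
by rewrite mulrAC.
Qed.

Lemma Ypsd P s (R : 'M[C]_(M, Nt)) f x : 0 <= P -> 0 < s ->
  0 <= dot x (Ymat P s R f *m x).
Proof.
move=> hP hs; rewrite Ymul dotDr !dotZr -mulrA -[dot x (R *m f)]dot_conj -normCK.
by apply: addr_ge0; apply: mulr_ge0; rewrite ?dot_ge0 ?exprn_ge0 ?invr_ge0 ?ler0n ?(divr_ge0 hP (ltW hs)). Qed.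

Lemma Ypos P s (R : 'M[C]_(M, Nt)) f x : (0 < M)%N -> 0 <= P -> 0 < s ->
  (forall i, `|x i 0| = 1) -> 0 < dot x (Ymat P s R f *m x).
Proof.
move=> hM hP hs hx; rewrite Ymul dotDr !dotZr -mulrA -[dot x (R *m f)]dot_conj -normCK.
have -> : dot x x = M%:R.
  rewrite dotE (eq_bigr (fun _ => 1)) ?sumr_const ?card_ord //.
  by move=> i _; rewrite -normCKC hx expr1n.
rewrite mulVf ?pnatr_eq0 -?lt0n //.
by apply: ltr_wpDr; [apply: mulr_ge0; [exact: divr_ge0 hP (ltW hs) | exact: exprn_ge0] | exact: ltr01].
Qed.
End Y.

Section CS.
Variables (C : numClosedFieldType) (M : nat).
Implicit Types (x y z u : 'cV[C]_M).

Lemma dot0r z : dot z (0 : 'cV[C]_M) = 0.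
Proof. by rewrite -dot_conj dot0l rmorph0. Qed.

Lemma dot_gt0 u : u != 0 -> 0 < dot u u.
Proof.
move=> nz; rewrite lt_def dot_ge0 andbT; apply/eqP => /dot_eq0 /eqP.
by rewrite (negbTE nz).
Qed.

Lemma cauchy_schwarz u z : dot u z * dot z u <= dot u u * dot z z.
Proof.
case: (eqVneq u 0) => [->|nz]; first by rewrite !dot0l !mul0r.
have hnu := dot_gt0 nz.
have H := dot_ge0 (dot u u *: z - dot u z *: u).
rewrite dotBl !dotBr !dotZl !dotZr (geC0_conj (ltW hnu)) dot_conj in H.
have E : dot u u * (dot u u * dot z z - dot u z * dot z u) =
  dot u u * (dot u u * dot z z) - dot u u * (dot u z * dot z u) -
  (dot z u * (dot u u * dot u z) - dot z u * (dot u z * dot u u)) by ring.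
rewrite -E pmulr_rge0 // subr_ge0 in H.
exact: H.
Qed.

Lemma eig_rank1 (c k : C) u : (0 < M)%N ->
  eigenvalue (c%:M + k *: (u *m hadj u)) (c + k * dot u u).
Proof.
move=> hM; apply/eigenvalueP.
case: (eqVneq u 0) => [->|nz].
  exists (const_mx 1 : 'rV[C]_M).
    by rewrite dot0l mulr0 addr0 mul0mx scaler0 addr0 mul_mx_scalar.
  apply/eqP => /matrixP /(_ 0 (Ordinal hM)); rewrite !mxE => /eqP.
  by rewrite oner_eq0.
exists (hadj u).
  rewrite mulmxDr mul_mx_scalar -scalemxAr !mulmxA.
  rewrite [hadj u *m u]mx11_scalar mul_scalar_mx -/(dot u u).
  by rewrite scalerDl scalerA.
apply: contra nz => /eqP H; apply/eqP/matrixP => i j.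
have := congr1 (fun A : 'rV[C]_M => A j i) H; rewrite !mxE => /eqP.
by rewrite conjC_eq0 => /eqP ->.
Qed.
End CS.

Section Bound.
Variables (C : numClosedFieldType) (M Nt : nat).

Lemma lam_bound P s (R : 'M[C]_(M, Nt)) f lam : (0 < M)%N -> 0 <= P -> 0 < s ->
  is_lambda_max (Ymat P s R f) lam ->
  (M%:R)^-1 + P / s * dot (R *m f) (R *m f) <= lam.
Proof.
move=> hM hP hs [_ hl]; apply: hl; rewrite YmatE; exact: eig_rank1.
Qed.

Lemma Yupper P s (R : 'M[C]_(M, Nt)) f lam z : (0 < M)%N -> 0 <= P -> 0 < s ->
  is_lambda_max (Ymat P s R f) lam ->
  dot z (Ymat P s R f *m z) <= lam * dot z z.
Proof.
move=> hM hP hs hl; have hb := lam_bound hM hP hs hl.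
have hk : 0 <= P / s := divr_ge0 hP (ltW hs).
rewrite Ymul dotDr !dotZr -mulrA.
apply: le_trans (ler_wpM2r (dot_ge0 z) hb).
rewrite mulrDl lerD2l -[P / s * _ * _]mulrA; exact: (ler_wpM2l hk (cauchy_schwarz _ _)).
Qed.

Lemma lam_gt0 P s (R : 'M[C]_(M, Nt)) f lam : (0 < M)%N -> 0 <= P -> 0 < s ->
  is_lambda_max (Ymat P s R f) lam -> 0 < lam.
Proof.
move=> hM hP hs hl; apply: lt_le_trans (lam_bound hM hP hs hl).
apply: ltr_wpDr; first by apply: mulr_ge0; [exact: divr_ge0 hP (ltW hs)|exact: dot_ge0].
by rewrite invr_gt0 ltr0n.
Qed.

Lemma step3 (w x0 x1 : 'cV[C]_M) :
  (forall i, `|x0 i 0| = 1) -> (forall i, `|x1 i 0| = 1) ->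
  (forall i, w i 0 != 0 -> x1 i 0 = w i 0 / `|w i 0|) ->
  dot w x0 + dot x0 w <= dot w x1 + dot x1 w.
Proof.
move=> h0 h1 hu; rewrite !dotE -!big_split /=; apply: ler_sum => i _.
case: (eqVneq (w i 0) 0) => [->|nz]; first by rewrite rmorph0 !mul0r !mulr0 !addr0.
have Hre : forall z : C, z + z^* = 2%:R * 'Re z.
  by move=> z; rewrite ReE mulrC divfK // pnatr_eq0.
have -> : (x0 i 0)^* * w i 0 = ((w i 0)^* * x0 i 0)^* by rewrite rmorphM /= conjCK mulrC.
rewrite Hre (hu i nz).
have -> : (w i 0)^* * (w i 0 / `|w i 0|) + (w i 0 / `|w i 0|)^* * w i 0
   = 2%:R * `|(w i 0)^* * x0 i 0|.
  rewrite normrM h0 mulr1 norm_conjC rmorphM /= fmorphV /= (geC0_conj (normr_ge0 _)).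
  have nw : `|w i 0| != 0 by rewrite normr_eq0.
  have -> : (w i 0)^* * (w i 0 / `|w i 0|) + (w i 0)^* / `|w i 0| * w i 0
     = 2 * ((w i 0)^* * w i 0) / `|w i 0| by field.
  by rewrite -normCKC; field.
exact: (ler_wpM2l (ler0n _ 2) ((leif_Re_Creal _).1)).
Qed.
End Bound.

Section Core.
Variables (C : numClosedFieldType) (M : nat).

Lemma mm_core (A B : 'M[C]_M) lam (v v' : 'cV[C]_M) :
  (forall x y, dot (A *m x) y = dot x (A *m y)) ->
  (forall x y, dot (B *m x) y = dot x (B *m y)) ->
  (forall z, 0 <= dot z (A *m z)) ->
  (forall z, dot z (B *m z) <= lam * dot z z) ->
  lam^* = lam ->
  0 < dot v (A *m v) -> 0 < dot v (B *m v) -> 0 < dot v' (B *m v') ->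
  dot v' v' = dot v v ->
  (let w := wvec A B lam v in dot w v + dot v w <= dot w v' + dot v' w) ->
  dot v (A *m v) / dot v (B *m v) <= dot v' (A *m v') / dot v' (B *m v').
Proof.
move=> hA hB psd up lc a0p b0p b1p nn /= hw.
have e1 := psd (v' - (dot v' (B *m v') / dot v (B *m v)) *: v).
have e2 := up (v' - v); rewrite -subr_ge0 in e2.
rewrite -subr_ge0 in hw.
have qge : 0 <= dot v (A *m v) / dot v (B *m v) ^+ 2.
  by rewrite divr_ge0 ?exprn_ge0 ?ltW.
have pos := addr_ge0 (addr_ge0 (divr_ge0 e1 (ltW b1p)) (mulr_ge0 qge e2)) hw.
rewrite -subr_ge0; apply: (le_trans pos); rewrite le_eqVlt; apply/orP; left; apply/eqP.
have c1 : ((dot v (B *m v))^-1)^* = (dot v (B *m v))^-1.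
  by rewrite geC0_conj // invr_ge0 ltW.
have c2 : (dot v (A *m v) / dot v (B *m v) ^+ 2)^* = dot v (A *m v) / dot v (B *m v) ^+ 2.
  by rewrite geC0_conj.
have c3 : (dot v' (B *m v') / dot v (B *m v))^* = dot v' (B *m v') / dot v (B *m v).
  by rewrite geC0_conj // divr_ge0 ?ltW.
rewrite /wvec !qformE mulmxBl mul_scalar_mx.
rewrite !(mulmxBr, mulmxDr, mulmxN) -!scalemxAr !(dotBl, dotBr, dotDl, dotDr, dotNl, dotNr, dotZl, dotZr).
rewrite c1 c2 c3 lc !hA !hB nn.
have b0n : dot v (B *m v) != 0 by rewrite gt_eqF.
have b1n : dot v' (B *m v') != 0 by rewrite gt_eqF.
by field; rewrite b0n b1n.
Qed.
End Core.

Lemma dot_unit (C : numClosedFieldType) (M : nat) (x : 'cV[C]_M) :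
  (forall i, `|x i 0| = 1) -> dot x x = M%:R.
Proof.
move=> hx; rewrite dotE (eq_bigr (fun _ => 1)) ?sumr_const ?card_ord //.
by move=> i _; rewrite -normCKC hx expr1n.
Qed.

Theorem mainTheorem5 (C : numClosedFieldType) (M Nt : nat)
  (hM : (0 < M)%N) (hNt : (0 < Nt)%N)
  (P sl se : C) (hP : 0 <= P) (hsl : 0 < sl) (hse : 0 < se)
  (Rl Re : 'M[C]_(M, Nt)) (f : 'cV[C]_Nt)
  (lam : C) (hlam : is_lambda_max (Ymat P se Re f) lam)
  (v v' : 'cV[C]_M)
  (hv : forall i, `|v i 0| = 1)
  (hv' : forall i, `|v' i 0| = 1)
  (hupd : forall i,
     let w := wvec (Ymat P sl Rl f) (Ymat P se Re f) lam v in
     w i 0 != 0 -> v' i 0 = w i 0 / `|w i 0|) :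
  gratio (Ymat P sl Rl f) (Ymat P se Re f) v <=
  gratio (Ymat P sl Rl f) (Ymat P se Re f) v'.
Proof.
rewrite /gratio !qformE.
apply: (mm_core (lam := lam)).
- by move=> x y; apply: Yherm.
- by move=> x y; apply: Yherm.
- by move=> z; apply: Ypsd.
- by move=> z; apply: Yupper.
- exact: geC0_conj (ltW (lam_gt0 hM hP hse hlam)).
- exact: Ypos.
- exact: Ypos.
- exact: Ypos.
- by rewrite !dot_unit.
- exact: step3 hv hv' hupd.
Qed.
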